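(* Let $\alpha:=\frac{\sqrt{e^2+4}-e}{2e}\approx0.2178$. For $x\in[0,1]$, $y\ge0$ with $a:=|x-y|\le\alpha$, we have \[ |x\log x-y\log y|\le -a\log a, \] with the convention $0\log0=0$. *)

(* Defs.v *)
From Stdlib Require Import Reals.
Open Scope R_scope.

Definition xlogx (x : R) : R := if Req_EM_T x 0 then 0 else x * ln x.

Definition alpha : R := (sqrt (exp 1 ^ 2 + 4) - exp 1) / (2 * exp 1).

(* Main.v *)
Require Import Defs.
From Stdlib Require Import Reals Lra Psatz.
Open Scope R_scope.

Lemma lnle x y : 0 < x -> x <= y -> ln x <= ln y.
Proof. intros Hx Hxy. destruct (Req_dec x y) as [->|H]; [lra|].
  left; apply ln_increasing; lra. Qed.

Lemma alpha_prod : alpha * (1 + alpha) = / (exp 1 * exp 1).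
Proof.
  unfold alpha. assert (He : 0 < exp 1) by apply exp_pos.
  assert (Hs := sqrt_sqrt (exp 1 ^ 2 + 4) ltac:(nra)).
  set (sq := sqrt (exp 1 ^ 2 + 4)) in *.
  replace ((sq - exp 1) / (2 * exp 1) * (1 + (sq - exp 1) / (2 * exp 1)))
    with ((sq * sq - exp 1 * exp 1) / (4 * exp 1 * exp 1)) by (field; lra).
  rewrite Hs. field. lra.
Qed.

Lemma alpha_nn : 0 <= alpha.
Proof.
  unfold alpha. assert (He : 0 < exp 1) by apply exp_pos.
  assert (Hs := sqrt_sqrt (exp 1 ^ 2 + 4) ltac:(nra)).
  assert (0 <= sqrt (exp 1 ^ 2 + 4)) by apply sqrt_pos.
  apply Rmult_le_pos; [nra|]. left; apply Rinv_0_lt_compat; lra.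
Qed.

Lemma lna (a : R) : 0 < a -> a <= alpha -> ln a + ln (1 + a) <= -2.
Proof.
  intros Ha Hal. rewrite <- ln_mult by lra.
  replace (-2) with (ln (/ (exp 1 * exp 1))).
  2:{ rewrite ln_Rinv by (apply Rmult_lt_0_compat; apply exp_pos).
      rewrite ln_mult by apply exp_pos. rewrite ln_exp. lra. }
  apply lnle; [nra|]. rewrite <- alpha_prod. nra.
Qed.

Lemma key (u a : R) : 0 <= u <= 1 -> 0 < a -> a <= alpha ->
  Rabs ((u + a) * ln (u + a) - xlogx u) <= - (a * ln a).
Proof.
  intros Hu Ha Hal. pose proof (lna a Ha Hal) as L.
  assert (L1 : 0 <= ln (1 + a)) by (rewrite <- ln_1; apply lnle; lra).
  unfold xlogx. destruct (Req_EM_T u 0) as [->|Hu0].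
  - rewrite Rplus_0_l, Rminus_0_r. rewrite Rabs_left1; [lra|].
    assert (ln a <= 0) by lra. nra.
  - assert (Hup : 0 < u) by lra.
    assert (E : (u + a) * ln (u + a) - u * ln u
                = a * ln (u + a) + u * (ln (u + a) - ln u)) by ring.
    rewrite E.
    assert (D0 : 0 <= ln (u + a) - ln u) by (assert (ln u <= ln (u+a)) by (apply lnle; lra); lra).
    assert (D1 : u * (ln (u + a) - ln u) <= a).
    { pose proof (exp_ineq1_le (ln (u + a) - ln u)) as X.
      unfold Rminus in X. rewrite exp_plus, exp_Ropp, !exp_ln in X by lra.
      apply Rmult_le_compat_l with (r := u) in X; [|lra].
      replace (u * ((u + a) * / u)) with (u + a) in X by (field; lra). nra. }
    assert (V1 : ln (u + a) <= ln (1 + a)) by (apply lnle; lra).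
    assert (V2 : ln a <= ln (u + a)) by (apply lnle; lra).
    apply Rabs_le; split; nra.
Qed.

Theorem lemma5 (x y : R) (hx0 : 0 <= x) (hx1 : x <= 1) (hy : 0 <= y)
  (ha : Rabs (x - y) <= alpha) :
  Rabs (xlogx x - xlogx y) <= - xlogx (Rabs (x - y)).
Proof.
  destruct (Req_dec x y) as [->|Hne].
  - replace (xlogx y - xlogx y) with 0 by ring. replace (y - y) with 0 by ring.
    rewrite Rabs_R0. unfold xlogx.
    destruct (Req_EM_T 0 0); [lra|congruence].
  - assert (Hp : 0 < Rabs (x - y)) by (apply Rabs_pos_lt; lra).
    assert (Hx : xlogx (Rabs (x - y)) = Rabs (x - y) * ln (Rabs (x - y))).
    { unfold xlogx. destruct (Req_EM_T (Rabs (x - y)) 0); [lra|reflexivity]. }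
    rewrite Hx.
    destruct (Rle_lt_dec x y) as [Hxy|Hxy].
    + assert (E : Rabs (x - y) = y - x) by (rewrite Rabs_left1; lra).
      rewrite E in *. rewrite Rabs_minus_sym.
      assert (Ey : xlogx y = (x + (y - x)) * ln (x + (y - x))).
      { unfold xlogx. destruct (Req_EM_T y 0); [lra|]. f_equal; f_equal; ring. }
      rewrite Ey. apply key; lra.
    + assert (E : Rabs (x - y) = x - y) by (rewrite Rabs_right; lra).
      rewrite E in *.
      assert (Ex : xlogx x = (y + (x - y)) * ln (y + (x - y))).
      { unfold xlogx. destruct (Req_EM_T x 0); [lra|]. f_equal; f_equal; ring. }
      rewrite Ex. apply key; lra.
Qed.
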